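(* Let $M,N\ge1$ be integers and let $\sigma$ be a nonempty set of (distinct) functions $\mathbb{Z}_M\to\mathbb{Z}_N$ that is totally indistinguishable. Then $\sigma$ has cardinality at least $4$.
   Context: A set $\sigma$ of functions $\mathbb{Z}_M\to\mathbb{Z}_N$ is totally indistinguishable if for every $x\in\mathbb{Z}_M$ and every $f\in\sigma$ there exists $f'\in\sigma$ with $f'\neq f$ and $f'(x)=f(x)$. *)

(* Defs.v *)
From mathcomp Require Import all_boot.
Set Implicit Arguments. Unset Strict Implicit. Unset Printing Implicit Defensive.

(* Z_M is represented by the ordinal type 'I_M = {0,...,M-1} (valid for all M >= 1;
   the ring structure is irrelevant here). A set of functions Z_M -> Z_N is a
   finite set of finite functions. *)
Definition totally_indistinguishable (M N : nat)
    (sigma : {set {ffun 'I_M -> 'I_N}}) : Prop :=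
  forall (x : 'I_M) (f : {ffun 'I_M -> 'I_N}), f \in sigma ->
    exists f' : {ffun 'I_M -> 'I_N}, [/\ f' \in sigma, f' != f & f' x = f x].

(* Main.v *)
Require Import Defs.
From mathcomp Require Import all_boot.

Theorem lemma2 (M N : nat) (hM : 1 <= M) (hN : 1 <= N)
    (sigma : {set {ffun 'I_M -> 'I_N}}) :
  sigma != set0 -> totally_indistinguishable sigma -> 4 <= #|sigma|.
Proof.
move=> /set0Pn [f fS] H.
have [f0 [f0S f0f _]] := H (Ordinal hM) f fS.
have : exists x, f x != f0 x.
  apply/existsP; apply: contraR f0f => /existsPn Hx.
  apply/eqP/ffunP => x; apply/eqP; rewrite eq_sym; exact/negPn/Hx.
case=> x fx.
have [f1 [f1S f1f f1x]] := H x f fS.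
have [g1 [g1S g1f g1x]] := H x f0 f0S.
have s1 : uniq [:: f; f0; f1; g1].
  rewrite /= !inE !negb_or eq_sym f0f eq_sym f1f.
  have e1 : f1 != f0 by apply: contraNneq fx => E; rewrite -E f1x.
  have e2 : g1 != f by apply: contraNneq fx => E; rewrite -E g1x.
  have e3 : g1 != f1 by apply: contraNneq fx => E; rewrite -f1x -E g1x.
  by rewrite (eq_sym f g1) (eq_sym f0 g1) (eq_sym f1 g1) (eq_sym f0 f1) e2 g1f e3 e1.
rewrite cardE.
have -> : 4 = size [:: f; f0; f1; g1] by [].
apply: uniq_leq_size s1 _ => y; rewrite !inE mem_enum.
by case/or4P => /eqP ->.
Qed.
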